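(* Let $G_H$ be a finite undirected multigraph (parallel edges allowed, no self-loops) with vertex set $V$ and edge set partitioned as $E = S \sqcup S^c$ into secure edges $S$ and insecure edges $S^c$, and let $0 < p_J^{S^c} \le p_J^{S} \le p_I$ be real costs satisfying $p_J^{S^c} < p_I/2$ and $p_J^{S} + p_J^{S^c} < p_I$. Give weight $p_J^{S}$ to secure edges and $p_J^{S^c}$ to insecure edges, and let $C^*$ be a cut of minimum weight among cuts containing at least one insecure edge. Then the attack $(C^*, J, I)$ with $I = \{e\}$ for some insecure edge $e \in C^*$ and $J = C^*\setminus \{e\}$ (all other secure and insecure edges of $C^*$ jammed) is an optimal detectable generalized attack in $G_H$.
   Context: For a nonempty proper subset $U \subsetneq V$, the cut $\delta(U)$ is the set of edges with exactly one endpoint in $U$; a cut of $G_H$ is any set of this form. The costs are: $p_J^{S^c}$ per jammed insecure edge, $p_J^S$ per jammed secure edge, $p_I$ per insecure edge with injected data. A generalized attack is a triple $(C,J,I)$ where $C$ is a cut, $J \subseteq C$ is the set of jammed edges, and $I \subseteq (C \cap S^c)\setminus J$ is a nonempty set of injected edges; its cost is $p_J^{S}|J\cap S| + p_J^{S^c}|J \cap S^c| + p_I |I|$. The attack is detectable if $2|I| > |C \setminus J|$ (the injected edges form a strict majority of the non-jammed edges of the cut). An optimal detectable generalized attack is one of minimum cost among all detectable generalized attacks. *)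

(* Defs.v *)
From mathcomp Require Import all_boot all_order all_algebra.
Set Implicit Arguments. Unset Strict Implicit. Unset Printing Implicit Defensive.
Import Order.TTheory GRing.Theory Num.Theory.
Local Open Scope ring_scope.

(* A finite undirected multigraph: finite vertex type V, finite edge type E,
   and an endpoint map [ends : E -> V * V] (the order of the pair is
   irrelevant for all notions below). Parallel edges are distinct elements
   of E with the same endpoints. *)

Section Defs.
Variables (V E : finType) (ends : E -> V * V).

Definition loopless : Prop := forall e : E, (ends e).1 != (ends e).2.

Definition cut_of (U : {set V}) : {set E} :=
  [set e | ((ends e).1 \in U) != ((ends e).2 \in U)].

Definition is_cut (C : {set E}) : Prop :=
  exists U : {set V}, [/\ U != set0, U != setT & C = cut_of U].

Variable S : {set E}.

Definition gen_attack (C J I : {set E}) : Prop :=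
  [/\ is_cut C, J \subset C, I \subset (C :&: ~: S) :\: J & I != set0].

Variable R : realFieldType.
Variables (pJS pJSc pI : R).

Definition attack_cost (J I : {set E}) : R :=
  pJS * #|J :&: S|%:R + pJSc * #|J :&: ~: S|%:R + pI * #|I|%:R.

Definition detectable (C J I : {set E}) : bool :=
  (#|C :\: J| < 2 * #|I|)%N.

Definition optimal_detectable_attack (C J I : {set E}) : Prop :=
  [/\ gen_attack C J I, detectable C J I &
      forall C' J' I', gen_attack C' J' I' -> detectable C' J' I' ->
        attack_cost J I <= attack_cost J' I'].

Definition cut_weight (C : {set E}) : R :=
  pJS * #|C :&: S|%:R + pJSc * #|C :&: ~: S|%:R.

Definition min_insecure_cut (C : {set E}) : Prop :=
  [/\ is_cut C, C :&: ~: S != set0 &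
      forall C', is_cut C' -> C' :&: ~: S != set0 -> cut_weight C <= cut_weight C'].

End Defs.

(* Main.v *)
Require Import Defs.
From mathcomp Require Import all_boot all_order all_algebra.
From mathcomp Require Import ring lra zify.
Import Order.TTheory GRing.Theory Num.Theory.
Local Open Scope ring_scope.

Lemma split_card (T : finType) (C J S : {set T}) : J \subset C ->
  #|C :&: S| = (#|J :&: S| + #|(C :\: J) :&: S|)%N.
Proof.
move=> sJC; rewrite -(cardsID J (C :&: S)).
have -> : C :&: S :&: J = J :&: S.
  apply/setP => x; rewrite !inE; have := subsetP sJC x.
  by case: (x \in J); case: (x \in C); case: (x \in S) => // /(_ isT).
have -> : C :&: S :\: J = (C :\: J) :&: S.
  by apply/setP => x; rewrite !inE; case: (x \in J); case: (x \in C); case: (x \in S).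
by [].
Qed.

Lemma real_ineq (R : realFieldType) (pJS pJSc pI : R) (a b c d k : nat) :
  0 < pJSc -> pJSc <= pJS -> pJS + pJSc < pI ->
  (c + d < 2 * k)%N -> (k <= d)%N -> (0 < k)%N ->
  pJS * (a + c)%:R + pJSc * (b + d)%:R - pJSc + pI <=
  pJS * a%:R + pJSc * b%:R + pI * k%:R.
Proof.
move=> h0 h1 h2 hcd hkd hk.
have [k' hk'] : exists k', k = k'.+1 by exists k.-1; rewrite prednK.
subst k.
have [d' hd'] : exists d', d = (k'.+1 + d')%N by exists (d - k'.+1)%N; rewrite subnKC.
subst d.
have hc : (c + d' <= k')%N by lia.
have hc' : (c%:R + d'%:R <= k'%:R :> R) by rewrite -natrD ler_nat.
have c0 : (0 <= c%:R :> R) by [].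
have d0 : (0 <= d'%:R :> R) by [].
have k0 : (0 <= k'%:R :> R) by [].
have e1 : 0 <= pJS * (k'%:R - c%:R - d'%:R) by apply: mulr_ge0; lra.
have e2 : 0 <= (pJS - pJSc) * d'%:R by apply: mulr_ge0; lra.
have e3 : 0 <= (pI - pJS - pJSc) * k'%:R by apply: mulr_ge0; lra.
rewrite !natrD -addn1 !natrD.
nra.
Qed.

Theorem theorem7 (V E : finType) (ends : E -> V * V) (S : {set E})
    (R : realFieldType) (pJS pJSc pI : R) (Cstar : {set E}) (e : E) :
  loopless ends ->
  0 < pJSc -> pJSc <= pJS -> pJS <= pI ->
  pJSc < pI / 2%:R -> pJS + pJSc < pI ->
  min_insecure_cut ends S pJS pJSc Cstar ->
  e \in Cstar :&: ~: S ->
  optimal_detectable_attack ends S pJS pJSc pI Cstar (Cstar :\ e) [set e].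
Proof.
move=> _ h0 h1 h2 _ h4 [cutC nzC minC] eC.
have eC' := eC; rewrite !inE in eC'; case/andP: eC' => eCs eNS.
have diffE : Cstar :\: (Cstar :\ e) = [set e].
  apply/setP => x; rewrite !inE.
  by case: (boolP (x == e)) => [/eqP->|] /=; rewrite ?eCs //; case: (x \in Cstar).
split.
- split => //; first exact: subsetDl.
    by rewrite sub1set !inE eqxx eCs eNS.
  by apply/set0Pn; exists e; rewrite inE.
- by rewrite /detectable diffE cards1.
move=> C' J' I' [cutC' sJC sI nzI] det.
have hnz : C' :&: ~: S != set0.
  case/set0Pn: nzI => x xI; apply/set0Pn; exists x.
  by move: (subsetP sI x xI); rewrite !inE => /andP[_ /andP[-> ->]].
have hw := minC C' cutC' hnz.
move: hw; rewrite /cut_weight (@split_card _ _ _ S sJC) (@split_card _ _ _ (~: S) sJC).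
have -> : Cstar :&: S = (Cstar :\ e) :&: S.
  apply/setP => x; rewrite !inE.
  by case: (boolP (x == e)) => [/eqP->|]; rewrite ?(negbTE eNS) ?andbF.
have hCe : #|Cstar :&: ~: S| = (#|(Cstar :\ e) :&: ~: S|).+1.
  rewrite (@split_card _ _ _ (~: S) (subsetDl Cstar [set e])) diffE.
  have se : [set e] \subset ~: S by rewrite sub1set inE.
  by rewrite (setIidPl se) cards1 addn1.
rewrite hCe => hw.
rewrite /attack_cost cards1.
have hcd : (#|(C' :\: J') :&: S| + #|(C' :\: J') :&: ~: S|)%N = #|C' :\: J'|.
  by rewrite -(cardsID S (C' :\: J')) [(C' :\: J') :\: S]setDE.
have hkd : (#|I'| <= #|(C' :\: J') :&: ~: S|)%N.
  apply: subset_leq_card; apply: (subset_trans sI).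
  by apply/subsetP => z; rewrite !inE => /andP[-> /andP[-> ->]].
have hk : (0 < #|I'|)%N by rewrite card_gt0.
have hcd2 : (#|(C' :\: J') :&: S| + #|(C' :\: J') :&: ~: S| < 2 * #|I'|)%N.
  by rewrite hcd.
have H := @real_ineq R pJS pJSc pI #|J' :&: S| #|J' :&: ~: S| _ _ _ h0 h1 h4 hcd2 hkd hk.
move: hw H; rewrite -addn1 natrD mulrDr mulr1 mulr1.
set u1 := pJS * _; set u2 := pJSc * _; set u3 := pJS * _; set u4 := pJSc * _.
set u5 := pJS * _; set u6 := pJSc * _; set u7 := pI * _.
move=> hw H; lra.
Qed.
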